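(* Let $c\in\mathbb{R}[t]$ be a polynomial of degree one, let $P,D\in\mathbb{H}[t]$ with $P\neq 0$, and let $M=c^2P+\varepsilon D\in\mathbb{DH}[t]$ be reduced, i.e. there is no $r\in\mathbb{R}[t]$ of positive degree and $M'\in\mathbb{DH}[t]$ with $M=rM'$. Then $M$ cannot be written as a product of polynomials of degree one in $\mathbb{DH}[t]$.
   Context: $\mathbb{D}=\mathbb{R}[\varepsilon]/\langle\varepsilon^2\rangle$ denotes the dual numbers. $\mathbb{H}$ denotes the real quaternions with basis $1,\mathbf{i},\mathbf{j},\mathbf{k}$, $\mathbf{i}^2=\mathbf{j}^2=\mathbf{k}^2=\mathbf{i}\mathbf{j}\mathbf{k}=-1$. The dual quaternions $\mathbb{DH}$ are $\mathbb{H}\otimes_{\mathbb{R}}\mathbb{D}$ ($\varepsilon$ central, $\varepsilon^2=0$). $\mathbb{DH}[t]$ is the polynomial ring with dual quaternion coefficients in which $t$ commutes with all coefficients; every element is $P+\varepsilon D$ with $P,D\in\mathbb{H}[t]$ (primal and dual part). *)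

(* Defs.v *)
From HB Require Import structures.
From mathcomp Require Import all_boot all_order all_algebra.
From mathcomp Require Import reals.
Set Implicit Arguments. Unset Strict Implicit. Unset Printing Implicit Defensive.
Import Order.TTheory GRing.Theory Num.Theory.
Local Open Scope ring_scope.

(* Quaternions with coefficients in a commutative ring A:
   a0 + a1 i + a2 j + a3 k.  Since t is central in H[t],
   H[t] = quat {poly R} (quaternions over the commutative ring R[t]). *)
Record quat (A : Type) := Quat { q0 : A; q1 : A; q2 : A; q3 : A }.

Section Quat.
Variable A : comNzRingType.

Definition qzero : quat A := Quat 0 0 0 0.
Definition qone : quat A := Quat 1 0 0 0.
Definition qadd (a b : quat A) : quat A :=
  Quat (q0 a + q0 b) (q1 a + q1 b) (q2 a + q2 b) (q3 a + q3 b).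
(* Hamilton product: i^2 = j^2 = k^2 = ijk = -1 *)
Definition qmul (a b : quat A) : quat A :=
  Quat (q0 a * q0 b - q1 a * q1 b - q2 a * q2 b - q3 a * q3 b)
       (q0 a * q1 b + q1 a * q0 b + q2 a * q3 b - q3 a * q2 b)
       (q0 a * q2 b - q1 a * q3 b + q2 a * q0 b + q3 a * q1 b)
       (q0 a * q3 b + q1 a * q2 b - q2 a * q1 b + q3 a * q0 b).
Definition qscale (r : A) (a : quat A) : quat A :=
  Quat (r * q0 a) (r * q1 a) (r * q2 a) (r * q3 a).
End Quat.

(* Dual quaternion polynomials DH[t]: elements P + eps D with P, D in H[t]. *)
Record dqpoly (R : realType) := DQ { primal : quat {poly R}; dual : quat {poly R} }.

Section DQ.
Variable R : realType.

Definition dqone : dqpoly R := DQ (qone _) (qzero _).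
(* (P1 + eps D1)(P2 + eps D2) = P1 P2 + eps (P1 D2 + D1 P2) *)
Definition dqmul (M N : dqpoly R) : dqpoly R :=
  DQ (qmul (primal M) (primal N))
     (qadd (qmul (primal M) (dual N)) (qmul (dual M) (primal N))).
Definition dqscale (r : {poly R}) (M : dqpoly R) : dqpoly R :=
  DQ (qscale r (primal M)) (qscale r (dual M)).
Definition dqprod (fs : seq (dqpoly R)) : dqpoly R := foldr dqmul dqone fs.

Definition quat_size (a : quat {poly R}) : nat :=
  maxn (maxn (size (q0 a)) (size (q1 a))) (maxn (size (q2 a)) (size (q3 a))).
Definition dq_deg (M : dqpoly R) : nat :=
  (maxn (quat_size (primal M)) (quat_size (dual M))).-1.

Definition dq_reduced (M : dqpoly R) : Prop :=
  ~ exists (r : {poly R}) (M' : dqpoly R), (1 < size r)%N /\ M = dqscale r M'.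
End DQ.

(* Main.v *)
Require Import Defs.
From HB Require Import structures.
From mathcomp Require Import all_boot all_order all_algebra.
From mathcomp Require Import reals.
From mathcomp Require Import ring zify.
Set Implicit Arguments. Unset Strict Implicit. Unset Printing Implicit Defensive.
Import Order.TTheory GRing.Theory Num.Theory.
Local Open Scope ring_scope.

Section S.
Variable R : realType.

Definition qN (a : quat R) : R := q0 a ^+ 2 + q1 a ^+ 2 + q2 a ^+ 2 + q3 a ^+ 2.

Lemma qN_mul a b : qN (qmul a b) = qN a * qN b.
Proof. case: a => a0 a1 a2 a3; case: b => b0 b1 b2 b3; rewrite /qN /=; ring. Qed.

Lemma qN_eq0 a : qN a = 0 -> a = qzero R.
Proof.
case: a => a0 a1 a2 a3; rewrite /qN /= => H.
have h0 := sqr_ge0 a0; have h1 := sqr_ge0 a1; have h2 := sqr_ge0 a2; have h3 := sqr_ge0 a3.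
have e3 : a3 ^+ 2 = 0 by apply/eqP; rewrite eq_le h3 andbT -H; rewrite !lerDr ?addr_ge0.
have e2 : a2 ^+ 2 = 0 by move: H; rewrite e3 addr0 => H; apply/eqP; rewrite eq_le h2 andbT -H; rewrite !lerDr ?addr_ge0.
have e1 : a1 ^+ 2 = 0 by move: H; rewrite e3 e2 !addr0 => H; apply/eqP; rewrite eq_le h1 andbT -H; rewrite !lerDr ?addr_ge0.
have e0 : a0 ^+ 2 = 0 by move: H; rewrite e3 e2 e1 !addr0.
move/eqP: e0; move/eqP: e1; move/eqP: e2; move/eqP: e3.
rewrite !sqrf_eq0 => /eqP-> /eqP-> /eqP-> /eqP->; done.
Qed.

Lemma qmul_eq0 a b : qmul a b = qzero R -> a = qzero R \/ b = qzero R.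
Proof.
move=> H.
have : qN (qmul a b) = 0 by rewrite H /qN /= expr0n /= !addr0.
rewrite qN_mul => /eqP; rewrite mulf_eq0 => /orP[/eqP/qN_eq0|/eqP/qN_eq0]; tauto.
Qed.

Variable x : R.

Definition qev (a : quat {poly R}) : quat R :=
  Quat (q0 a).[x] (q1 a).[x] (q2 a).[x] (q3 a).[x].
Definition qder (a : quat {poly R}) : quat {poly R} :=
  Quat (q0 a)^`() (q1 a)^`() (q2 a)^`() (q3 a)^`().

Lemma qev_mul a b : qev (qmul a b) = qmul (qev a) (qev b).
Proof. by rewrite /qev /=; rewrite !(hornerD, hornerN, hornerM). Qed.
Lemma qev_add a b : qev (qadd a b) = qadd (qev a) (qev b).
Proof. by rewrite /qev /=; rewrite !(hornerD). Qed.
Lemma qder_mul a b : qder (qmul a b) = qadd (qmul (qder a) b) (qmul a (qder b)).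
Proof. rewrite /qder /qadd /=; rewrite !(derivD, derivN, derivM); congr Quat; ring. Qed.

Lemma poly2 (p : {poly R}) : (size p <= 2)%N -> p = (p`_0)%:P + (p`_1)%:P * 'X.
Proof.
move=> hs; apply/polyP => i; rewrite coefD coefC mul_polyC coefZ coefX.
case: i => [|[|i]] /=; rewrite ?mulr1 ?mulr0 ?addr0 ?add0r //.
by rewrite nth_default //; apply: leq_trans hs _.
Qed.

Lemma lin_zero (p : {poly R}) : (size p <= 2)%N -> p.[x] = 0 -> (p^`()).[x] = 0 -> p = 0.
Proof.
move=> hs; rewrite (poly2 hs).
rewrite derivD derivC derivM derivC derivX mul0r add0r mulr1.
rewrite !(hornerD, hornerC, hornerM, hornerX) add0r => h0 h1.
by move: h0; rewrite h1 mul0r addr0 => ->; rewrite !mul0r addr0.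
Qed.


Definition zb (a : quat R) : bool := [&& q0 a == 0, q1 a == 0, q2 a == 0 & q3 a == 0].
Lemma zbP a : zb a <-> a = qzero R.
Proof.
case: a => a0 a1 a2 a3; rewrite /zb /=; split.
  by case/and4P => /eqP-> /eqP-> /eqP-> /eqP->.
by case=> -> -> -> ->; rewrite eqxx.
Qed.

Lemma qmul0q (A : comNzRingType) (a : quat A) : qmul (qzero A) a = qzero A.
Proof. rewrite /qmul /qzero /=; congr Quat; ring. Qed.
Lemma qmulq0 (A : comNzRingType) (a : quat A) : qmul a (qzero A) = qzero A.
Proof. rewrite /qmul /qzero /=; congr Quat; ring. Qed.
Lemma qadd00 (A : comNzRingType) : qadd (qzero A) (qzero A) = qzero A.
Proof. by rewrite /qadd /qzero /= addr0. Qed.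

Definition kk (fs : seq (dqpoly R)) := count (fun F => zb (qev (primal F))) fs.

Lemma L4 fs : ((1 <= kk fs)%N -> qev (primal (dqprod fs)) = qzero R) /\
              ((2 <= kk fs)%N -> qev (dual (dqprod fs)) = qzero R).
Proof.
elim: fs => [|F fs [IH1 IH2]] //=.
rewrite /kk /= -/(kk fs) qev_mul qev_add !qev_mul.
case: (boolP (zb (qev (primal F)))) => /= hF.
  move/zbP: hF => ->; rewrite !qmul0q; split => // h.
  by rewrite IH1 // qmulq0 qadd00.
rewrite add0n; split => h; first by rewrite IH1 // qmulq0.
by rewrite IH1 ?(leq_trans _ h) // IH2 // !qmulq0 qadd00.
Qed.

Lemma qone_neq0 (A : comNzRingType) : qone A <> qzero A.
Proof. by case=> /eqP; rewrite oner_eq0. Qed.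

Lemma qev_one : qev (qone _) = qone R.
Proof. by rewrite /qev /= !hornerC. Qed.

Lemma L5 fs : kk fs = 0%N -> qev (primal (dqprod fs)) <> qzero R.
Proof.
elim: fs => [|F fs IH] /=; first by rewrite qev_one => _; apply: qone_neq0.
rewrite /kk /= -/(kk fs); case: (boolP (zb (qev (primal F)))) => //= hF /IH h.
rewrite qev_mul => /qmul_eq0 [/zbP|//]; by rewrite (negbTE hF).
Qed.

Definition good (F : dqpoly R) := primal F <> qzero _ /\
  [/\ (size (q0 (primal F)) <= 2)%N, (size (q1 (primal F)) <= 2)%N,
      (size (q2 (primal F)) <= 2)%N & (size (q3 (primal F)) <= 2)%N].

Lemma L7 F : good F -> qev (primal F) = qzero R -> qev (qder (primal F)) <> qzero R.
Proof.
case: F => [[a0 a1 a2 a3] d] [/= hnz [s0 s1 s2 s3]].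
rewrite /qev /=; case=> e0 e1 e2 e3 [f0 f1 f2 f3]; apply: hnz.
rewrite (lin_zero s0) // (lin_zero s1) // (lin_zero s2) // (lin_zero s3) //.
Qed.

Lemma qder_one : qder (qone _) = qzero {poly R}.
Proof. rewrite /qder /= !derivC /qzero; reflexivity. Qed.

Lemma qaddq0 (a : quat R) : qadd a (qzero R) = a.
Proof. by case: a => *; rewrite /qadd /= !addr0. Qed.
Lemma qadd0q (a : quat R) : qadd (qzero R) a = a.
Proof. by case: a => *; rewrite /qadd /= !add0r. Qed.

Lemma L6 fs : List.Forall good fs -> kk fs = 1%N -> qev (qder (primal (dqprod fs))) <> qzero R.
Proof.
elim: fs => [|F fs IH] //= /List.Forall_cons_iff [gF hfs].
rewrite /kk /= -/(kk fs) qder_mul qev_add !qev_mul.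
case: (boolP (zb (qev (primal F)))) => /= hF.
  case=> h0; move/zbP: (hF) => ->; rewrite qmul0q qaddq0.
  move/qmul_eq0 => [|]; first by apply: L7 => //; apply/zbP.
  by apply: L5.
rewrite add0n => h1; have := (proj1 (L4 fs)); rewrite h1 => /(_ isT) ->.
rewrite qmulq0 qadd0q.
move/qmul_eq0 => [/zbP|]; first by rewrite (negbTE hF).
exact: IH.
Qed.


Lemma nth_Forall (G : dqpoly R -> Prop) (fs : seq (dqpoly R)) :
  (forall i, (i < size fs)%N -> G (nth (dqone R) fs i)) -> List.Forall G fs.
Proof.
elim: fs => [|F fs IH] h; first by constructor.
constructor; first exact: (h 0%N).
by apply: IH => i hi; apply: (h i.+1).
Qed.

Lemma prim_nz (fs : seq (dqpoly R)) : primal (dqprod fs) <> qzero _ ->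
  List.Forall (fun F => primal F <> qzero _) fs.
Proof.
elim: fs => [|F fs IH] /= h; first by constructor.
constructor => [hF|]; first by apply: h; rewrite hF qmul0q.
by apply: IH => hF; apply: h; rewrite hF qmulq0.
Qed.

Lemma Forall_and (G1 G2 : dqpoly R -> Prop) (fs : seq (dqpoly R)) :
  List.Forall G1 fs -> List.Forall G2 fs -> List.Forall (fun F => G1 F /\ G2 F) fs.
Proof.
elim: fs => [|F fs IH] h1 h2; first by constructor.
move: h1 h2 => /List.Forall_cons_iff [a1 b1] /List.Forall_cons_iff [a2 b2].
by constructor; [split | apply: IH].
Qed.

Lemma deg_good (F : dqpoly R) : dq_deg F = 1%N -> primal F <> qzero _ -> good F.
Proof.
rewrite /dq_deg /quat_size => hd hn; split => //.
split; lia.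
Qed.


Lemma fact1 (p : {poly R}) : p.[x] = 0 -> exists q, p = ('X - x%:P) * q.
Proof. by move=> h; case/factor_theorem: (introT eqP h : root p x) => q ->; exists q; rewrite mulrC. Qed.

Lemma witness (a b : quat {poly R}) : qev a = qzero R -> qev b = qzero R ->
  exists M', DQ a b = dqscale ('X - x%:P) M'.
Proof.
case: a => a0 a1 a2 a3; case: b => b0 b1 b2 b3; rewrite /qev /=.
case=> /fact1[p0 ->] /fact1[p1 ->] /fact1[p2 ->] /fact1[p3 ->].
case=> /fact1[r0 ->] /fact1[r1 ->] /fact1[r2 ->] /fact1[r3 ->].
by exists (DQ (Quat p0 p1 p2 p3) (Quat r0 r1 r2 r3)).
Qed.

Lemma sc_ev (c p : {poly R}) : c.[x] = 0 -> (c ^+ 2 * p).[x] = 0 /\ ((c ^+ 2 * p)^`()).[x] = 0.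
Proof.
move=> hx; rewrite derivM expr2 derivM !(hornerD, hornerM) hx !(mul0r, mulr0, add0r).
by split.
Qed.

Lemma scale_ev (c : {poly R}) (P : quat {poly R}) : c.[x] = 0 ->
  qev (qscale (c ^+ 2) P) = qzero R /\ qev (qder (qscale (c ^+ 2) P)) = qzero R.
Proof.
move=> hx; case: P => p0 p1 p2 p3; rewrite /qev /qder /qscale /= /qzero.
have [a0 b0] := sc_ev p0 hx; have [a1 b1] := sc_ev p1 hx.
have [a2 b2] := sc_ev p2 hx; have [a3 b3] := sc_ev p3 hx.
split; congr Quat; assumption.
Qed.

End S.

Theorem mainTheorem6 (R : realType) (c : {poly R}) (P D : quat {poly R}) :
  size c = 2%N ->
  P <> qzero _ ->
  dq_reduced (DQ (qscale (c ^+ 2) P) D) ->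
  ~ exists fs : seq (dqpoly R),
      (forall i, (i < size fs)%N -> dq_deg (nth (dqone R) fs i) = 1%N) /\
      dqprod fs = DQ (qscale (c ^+ 2) P) D.
Proof.
move=> hc hP hred [fs [hdeg hprod]].
have c1nz : c`_1 != 0.
  have : lead_coef c != 0 by rewrite lead_coef_eq0 -size_poly_eq0 hc.
  by rewrite lead_coefE hc.
pose x := - c`_0 / c`_1.
have hx : c.[x] = 0.
  rewrite (poly2 (eq_leq hc)) !(hornerD, hornerM, hornerC, hornerX) /x.
  by rewrite mulrCA divff // mulr1 addrN.
have [ev1 ev2] := scale_ev P hx.
have hPr : primal (dqprod fs) = qscale (c ^+ 2) P by rewrite hprod.
have hDr : dual (dqprod fs) = D by rewrite hprod.
have nz : qscale (c ^+ 2) P <> qzero _.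
  have c2 : c ^+ 2 != 0 by rewrite expf_neq0 // -size_poly_eq0 hc.
  case: P hP {ev1 ev2 hPr hprod hred} => p0 p1 p2 p3 hP; rewrite /qscale /=.
  case=> /eqP; rewrite mulf_eq0 (negbTE c2) /= => /eqP e0.
  move=> /eqP; rewrite mulf_eq0 (negbTE c2) /= => /eqP e1.
  move=> /eqP; rewrite mulf_eq0 (negbTE c2) /= => /eqP e2.
  move=> /eqP; rewrite mulf_eq0 (negbTE c2) /= => /eqP e3.
  by apply: hP; rewrite e0 e1 e2 e3.
have Fall : List.Forall (good (R:=R)) fs.
  have nz' : primal (dqprod fs) <> qzero _ by rewrite hPr.
  have := Forall_and (@nth_Forall R (fun F => dq_deg F = 1%N) fs hdeg) (prim_nz nz').
  apply: List.Forall_impl => F [h1 h2]; exact: deg_good.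
case k: (kk x fs) => [|[|k']].
- by apply: (L5 k); rewrite hPr.
- by apply: (L6 Fall k); rewrite hPr.
- have := proj2 (L4 x fs); rewrite k => /(_ isT); rewrite hDr => evD.
  apply: hred; have [M' eM] := witness ev1 evD.
  by exists ('X - x%:P), M'; rewrite size_XsubC.
Qed.
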